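(* Consider the minimax Markov control model on Borel spaces described in the context, let $\rho,h:{\cal X}\to[0,\infty)$ be bounded, continuous, measurable functions whose suprema and infima over ${\cal X}$ are attained, and let $\varphi\in\mathbb{F}$ be a selector. Then $(\rho,h,\varphi)$ is a canonical triplet if and only if for every $x\in{\cal X}$: (a) $\displaystyle\rho(x)=\inf_{u\in{\cal U}(x)}\sup_{Q(\cdot|x,u)\in\mathbf{B}_R(Q^o)(x,u)}\int_{\cal X}\rho(z)\,Q(dz|x,u)$; (b) $\displaystyle\rho(x)+h(x)=\inf_{u\in{\cal U}(x)}\sup_{Q(\cdot|x,u)\in\mathbf{B}_R(Q^o)(x,u)}\Big\{f(x,u)+\int_{\cal X}h(z)\,Q(dz|x,u)\Big\}$; (c) $\varphi(x)$ attains the infimum in both (a) and (b), i.e. $\displaystyle\rho(x)=\sup_{Q(\cdot|x,\varphi(x))\in\mathbf{B}_R(Q^o)(x,\varphi(x))}\int_{\cal X}\rho(z)Q(dz|x,\varphi(x))$ and $\displaystyle\rho(x)+h(x)=\sup_{Q(\cdot|x,\varphi(x))\in\mathbf{B}_R(Q^o)(x,\varphi(x))}\Big\{f(x,\varphi(x))+\int_{\cal X}h(z)Q(dz|x,\varphi(x))\Big\}$.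
   Context: Model: ${\cal X},{\cal U}$ are Polish spaces with Borel $\sigma$-algebras; for each $x$, ${\cal U}(x)\subseteq{\cal U}$ is a nonempty compact measurable set of feasible controls; $\mathbb{K}=\{(x,u):x\in{\cal X},u\in{\cal U}(x)\}$; $\mathbb{F}$ is the (assumed nonempty) set of measurable maps $\varphi:{\cal X}\to{\cal U}$ with $\varphi(x)\in{\cal U}(x)$ for all $x$ (selectors). $f:\mathbb{K}\to[0,\infty)$ is bounded and continuous; $Q^o(\cdot|x,u)$ is a stochastic kernel on ${\cal X}$ given $(x,u)\in\mathbb{K}$ with $Q^o(A|\cdot,\cdot)$ continuous on $\mathbb{K}$ for every Borel $A$. For probability measures, $\|\alpha-\beta\|_{TV}=\sup_P\sum_{F\in P}|\alpha(F)-\beta(F)|$, supremum over finite measurable partitions $P$ of ${\cal X}$. $R\in[0,2]$ and $\mathbf{B}_R(Q^o)(x,u)=\{Q(\cdot|x,u)\text{ probability on }{\cal X}:\|Q(\cdot|x,u)-Q^o(\cdot|x,u)\|_{TV}\le R\}$. Minimax $n$-stage costs with terminal cost $h$: $J_0^*(x,h)=h(x)$ and $J^*_{n+1}(x,h)=\inf_{u\in{\cal U}(x)}\sup_{Q(\cdot|x,u)\in\mathbf{B}_R(Q^o)(x,u)}\{f(x,u)+\int J^*_n(z,h)Q(dz|x,u)\}$; for the stationary policy $g^\infty$ that uses $\varphi$ at every stage, $J_0(g^\infty,x,h)=h(x)$ and $J_{n+1}(g^\infty,x,h)=\sup_{Q(\cdot|x,\varphi(x))\in\mathbf{B}_R(Q^o)(x,\varphi(x))}\{f(x,\varphi(x))+\int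 J_n(g^\infty,z,h)Q(dz|x,\varphi(x))\}$. Canonical triplet: $(\rho,h,\varphi)$, with $\rho,h$ real-valued bounded continuous nonnegative measurable functions on ${\cal X}$ and $\varphi\in\mathbb{F}$, is canonical if $J_n(g^\infty,x,h)=J^*_n(x,h)=n\rho(x)+h(x)$ for all $x\in{\cal X}$ and all $n=0,1,2,\dots$. *)

(* Defs.v *)
From HB Require Import structures.
From mathcomp Require Import all_boot all_order all_algebra.
From mathcomp Require Import all_classical all_reals all_analysis.
Set Implicit Arguments. Unset Strict Implicit. Unset Printing Implicit Defensive.
Import Order.TTheory GRing.Theory Num.Theory.
Import numFieldNormedType.Exports.
Local Open Scope classical_set_scope.
Local Open Scope ring_scope.

(* A Polish space: a (pointed) complete metric space which is Hausdorff
   (so the pseudometric is a metric) and separable. *)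
Definition polish (R : realType) (T : completePseudoMetricType R) : Prop :=
  hausdorff_space T /\ exists D : set T, countable D /\ dense D.

Definition borel (T : ptopologicalType) := g_sigma_algebraType (@open T).

Definition finite_mpartition d (T : measurableType d) (n : nat)
    (P : 'I_n -> set T) : Prop :=
  (forall i, measurable (P i)) /\ trivIset setT P /\ \bigcup_i P i = setT.

Definition tv_dist d (T : measurableType d) (R : realType)
    (alpha beta : set T -> \bar R) : \bar R :=
  ereal_sup [set e | exists (n : nat) (P : 'I_n -> set T),
     finite_mpartition P /\ e = (\sum_(i < n) `|alpha (P i) - beta (P i)|)%E].

Section Model.
Context (R : realType) (X U : ptopologicalType).

Definition tv_ball (Rad : R) (Qo : X -> U -> probability (borel X) R)
    (x : X) (u : U) : set (probability (borel X) R) :=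
  [set Q | (tv_dist Q (Qo x u) <= Rad%:E)%E].

Definition sup_step (Rad : R) (Qo : X -> U -> probability (borel X) R)
    (c : R) (v : X -> \bar R) (x : X) (u : U) : \bar R :=
  ereal_sup [set (c%:E + \int[Q]_(z in [set: borel X]) v z)%E
            | Q in tv_ball Rad Qo x u].

Fixpoint Jstar (Rad : R) (Ux : X -> set U) (f : X -> U -> R)
    (Qo : X -> U -> probability (borel X) R) (h : X -> R) (n : nat)
    : X -> \bar R :=
  match n with
  | 0 => fun x => (h x)%:E
  | n'.+1 => fun x =>
      ereal_inf [set sup_step Rad Qo (f x u) (Jstar Rad Ux f Qo h n') x u
                | u in Ux x]
  end.

Fixpoint Jpol (Rad : R) (f : X -> U -> R)
    (Qo : X -> U -> probability (borel X) R) (phi : X -> U) (h : X -> R)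
    (n : nat) : X -> \bar R :=
  match n with
  | 0 => fun x => (h x)%:E
  | n'.+1 => fun x =>
      sup_step Rad Qo (f x (phi x)) (Jpol Rad f Qo phi h n') x (phi x)
  end.

Definition selector (Ux : X -> set U) (phi : X -> U) : Prop :=
  measurable_fun [set: borel X] (phi : borel X -> borel U) /\
  forall x, Ux x (phi x).

Definition bounded_fun_X (g : X -> R) : Prop := exists M : R, forall x, `|g x| <= M.

Definition canonical_triplet (Rad : R) (Ux : X -> set U) (f : X -> U -> R)
    (Qo : X -> U -> probability (borel X) R)
    (rho h : X -> R) (phi : X -> U) : Prop :=
  ([/\ bounded_fun_X rho /\ bounded_fun_X h,
      continuous rho /\ continuous h,
      ((forall x, 0 <= rho x) /\ (forall x, 0 <= h x)) /\

      measurable_fun [set: borel X] (rho : borel X -> R) /\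
      measurable_fun [set: borel X] (h : borel X -> R),
      selector Ux phi &
      forall n x, Jpol Rad f Qo phi h n x = Jstar Rad Ux f Qo h n x /\
                  Jstar Rad Ux f Qo h n x = (n%:R * rho x + h x)%:E]).

End Model.

(* Main.v *)
Require Import Defs.
Set Warnings "-all".
From HB Require Import structures.
From mathcomp Require Import all_boot all_order all_algebra.
From mathcomp Require Import all_classical all_reals all_analysis.
From mathcomp Require Import lra measurable_realfun measurable_function.
Set Implicit Arguments. Unset Strict Implicit. Unset Printing Implicit Defensive.
Import Order.TTheory GRing.Theory Num.Theory.
Import numFieldNormedType.Exports.
Local Open Scope classical_set_scope.
Local Open Scope ring_scope.

Section Gen.
Context d (T : measurableType d) (R : realType).
Local Open Scope ereal_scope.

Lemma int_cstP (P : probability T R) (c : R) :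
  \int[P]_(z in [set: T]) (c%:E) = c%:E.
Proof.
have := integral_cst P measurableT c%:E.
by rewrite /= probability_setT mule1.
Qed.

Lemma int_lin (P : probability T R) (g k : T -> R) (a : R) :
  (0 <= a)%R -> (forall z, 0 <= g z)%R -> (forall z, 0 <= k z)%R ->
  measurable_fun [set: T] g -> measurable_fun [set: T] k ->
  \int[P]_(z in [set: T]) ((a * g z + k z)%R)%:E =
  a%:E * \int[P]_(z in [set: T]) (g z)%:E + \int[P]_(z in [set: T]) (k z)%:E.
Proof.
move=> a0 g0 k0 mg mk.
under eq_integral do rewrite EFinD EFinM.
rewrite ge0_integralD//.
- rewrite ge0_integralZl_EFin//.
  + by move=> z _; rewrite lee_fin.
  + exact/measurable_EFinP.
- by move=> z _; rewrite mule_ge0// lee_fin.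
- by apply/measurable_EFinP; apply: measurable_funM.
- by move=> z _; rewrite lee_fin.
- exact/measurable_EFinP.
Qed.

Lemma int_bnd (P : probability T R) (g : T -> R) (M : R) :
  (forall z, 0 <= g z <= M)%R -> measurable_fun [set: T] g ->
  0 <= \int[P]_(z in [set: T]) (g z)%:E <= M%:E.
Proof.
move=> gM mg; apply/andP; split.
  by apply: integral_ge0 => z _; rewrite lee_fin; case/andP: (gM z).
rewrite -(int_cstP P M); apply: ge0_le_integral => //.
- by move=> z _; rewrite lee_fin; case/andP: (gM z).
- exact/measurable_EFinP.
- by move=> z _; rewrite lee_fin; case/andP: (gM z) => _ ->.
Qed.

Lemma int_fin (P : probability T R) (g : T -> R) (M : R) :
  (forall z, 0 <= g z <= M)%R -> measurable_fun [set: T] g ->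
  \int[P]_(z in [set: T]) (g z)%:E = (fine (\int[P]_(z in [set: T]) (g z)%:E))%:E.
Proof.
move=> gM mg; have /andP[h1 h2] := int_bnd P gM mg.
rewrite fineK // ge0_fin_numE //; exact: le_lt_trans h2 (ltry _).
Qed.

End Gen.

Section Mix.
Context d (T : measurableType d) (R : realType) (P : probability T R) (a : T)
  (b : {nonneg R}) (b1 : (b%:num <= 1)%R).
Local Open Scope ereal_scope.

Let nb1_ge0 : (0 <= 1 - b%:num)%R. Proof. by rewrite subr_ge0. Qed.
Let nb1 : {nonneg R} := NngNum nb1_ge0.

Definition mixf (A : set T) : \bar R :=
  measure_add (mscale nb1 P) (mscale b \d_a) A.

Let mixf0 : mixf set0 = 0. Proof. exact: measure0. Qed.
Let mixf_ge0 A : 0 <= mixf A. Proof. exact: measure_ge0. Qed.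
Let mixf_sa : semi_sigma_additive mixf.
Proof. exact: (@measure_semi_sigma_additive _ _ _ (measure_add (mscale nb1 P) (mscale b \d_a))). Qed.

HB.instance Definition _ := isMeasure.Build _ _ _ mixf mixf0 mixf_ge0 mixf_sa.

Lemma mixfE A : mixf A = (1 - b%:num)%:E * P A + b%:num%:E * \d_a A.
Proof. by rewrite /mixf measure_addE. Qed.

Let mixf_setT : mixf setT = 1.
Proof. by rewrite mixfE probability_setT diracT !mule1 -EFinD subrK. Qed.

HB.instance Definition _ := @Measure_isProbability.Build _ _ R mixf mixf_setT.

Lemma int_mixf (g : T -> \bar R) : (forall z, 0 <= g z) -> measurable_fun setT g ->
  \int[mixf]_(z in setT) g z =
  (1 - b%:num)%:E * \int[P]_(z in setT) g z + b%:num%:E * g a.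
Proof.
move=> g0 mg.
rewrite (@eq_measure_integral _ _ _ _ (measure_add (mscale nb1 P) (mscale b \d_a))) //.
have g0' : forall z, setT z -> 0 <= g z by move=> z _.
rewrite ge0_integral_measure_add // !ge0_integral_mscale //.
by rewrite integral_dirac // diracT mul1e.
Qed.

End Mix.

Definition mixP d (T : measurableType d) (R : realType) (P : probability T R) (a : T)
  (b : {nonneg R}) (b1 : (b%:num <= 1)%R) : probability T R := @mixf d T R P a b b1.

Lemma mixPE d (T : measurableType d) (R : realType) (P : probability T R) (a : T)
  (b : {nonneg R}) (b1 : (b%:num <= 1)%R) A : mixP P a b1 A = mixf P a b1 A.
Proof. by []. Qed.

Lemma int_mixP d (T : measurableType d) (R : realType) (P : probability T R) (a : T)
  (b : {nonneg R}) (b1 : (b%:num <= 1)%R) (g : T -> \bar R) :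
  (forall z, (0 <= g z)%E) -> measurable_fun setT g ->
  (\int[mixP P a b1]_(z in setT) g z =
  (1 - b%:num)%:E * \int[P]_(z in setT) g z + b%:num%:E * g a)%E.
Proof. move=> g0 mg; exact: (@int_mixf _ _ _ P a b b1 g g0 mg). Qed.

Lemma int_ge d (T : measurableType d) (R : realType) (P : probability T R)
  (g : T -> R) (m : R) : 0 <= m -> (forall z, m <= g z) -> measurable_fun setT g ->
  (m%:E <= \int[P]_(z in setT) (g z)%:E)%E.
Proof.
move=> m0 mg gm; rewrite -(int_cstP P m); apply: ge0_le_integral => //.
- exact/measurable_EFinP.
- by move=> z _; rewrite lee_fin.
Qed.

Section TV.
Context d (T : measurableType d) (R : realType).
Local Open Scope ereal_scope.

Lemma prob_fin (P : probability T R) A : measurable A -> P A = (fine (P A))%:E.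
Proof. by move=> mA; rewrite fineK // fin_num_measure. Qed.

Lemma prob_01 (P : probability T R) A : measurable A -> (0 <= fine (P A) <= 1)%R.
Proof.
move=> mA; rewrite -lee_fin -prob_fin // measure_ge0 /= -lee_fin -prob_fin //.
exact: probability_le1.
Qed.

Lemma sum_part_le1 (P : probability T R) n (F : 'I_n -> set T) :
  finite_mpartition F -> \sum_(i < n) P (F i) <= 1.
Proof.
move=> [mF [tF _]].
have H := @measure_bigsetU_ord _ _ _ P n xpredT F mF tF.
rewrite -H; apply: probability_le1; exact: bigsetU_measurable.
Qed.

Lemma tv_self (P : probability T R) : tv_dist P P <= 0.
Proof.
apply: ge_ereal_sup => _ [n [F [[mF _] ->]]].
by rewrite big1 // => i _; rewrite subee ?abse0 // fin_num_measure.
Qed.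

Lemma tv_mix (P : probability T R) (a : T) (b : {nonneg R}) (b1 : (b%:num <= 1)%R) :
  tv_dist (mixP P a b1) P <= (2 * b%:num)%:E.
Proof.
apply: ge_ereal_sup => _ [n [F [hF ->]]].
have [mF _] := hF.
apply: (@le_trans _ _ (\sum_(i < n) (b%:num%:E * (\d_a (F i) + P (F i))))).
  apply: lee_sum => i _.
  rewrite mixPE mixfE (prob_fin P (mF i)) (prob_fin (\d_a) (mF i)).
  have := prob_01 P (mF i); have := prob_01 (\d_a) (mF i).
  set q := fine (P (F i)); set e := fine (\d_a (F i)).
  move=> /andP[e0 e1] /andP[q0 q1].
  rewrite -!EFinM -!EFinD /abse lee_fin.
  have bb : (0 <= b%:num)%R by [].
  clearbody q e.
  have := mulr_ge0 bb e0; have := mulr_ge0 bb q0.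
  rewrite ler_norml; move=> h1 h2; apply/andP; split; nra.
rewrite -ge0_sume_distrr; last by move=> i _; rewrite adde_ge0.
rewrite big_split /= EFinM [X in _ <= X]muleC.
apply: lee_wpmul2l; first by rewrite lee_fin.
have -> : 2%:E = (1 + 1 : \bar R) by rewrite -EFinD.
by apply: leeD; apply: sum_part_le1.
Qed.

Lemma tv0_eq (Q P : probability T R) : tv_dist Q P <= 0 ->
  forall A, measurable A -> Q A = P A.
Proof.
move=> H A mA.
pose F := fun i : 'I_2 => if i == ord0 then A else ~` A.
have hF : finite_mpartition F.
  split; first by move=> i; rewrite /F; case: ifP => _ //; exact: measurableC.
  split.
    move=> i j _ _ [z [Fi Fj]].
    apply/val_inj; move: i j Fi Fj; rewrite /F => -[[|[|//]] ?] [[|[|//]] ?] //=.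
  by apply/seteqP; split => // z _; case: (pselect (A z)) => Az;
    [exists ord0 | exists (lift ord0 ord0)] => //; rewrite /F /=.
have : \sum_(i < 2) `|Q (F i) - P (F i)| <= 0.
  apply: le_trans H; apply: ereal_sup_ubound; exists 2%N, F; split => //.
rewrite big_ord_recl /= => H2.
have H3 : `|Q A - P A| <= 0.
  apply: le_trans H2; rewrite /F /=; apply: leeDl.
  by apply: sume_ge0 => i _; exact: abse_ge0.
rewrite (prob_fin Q mA) (prob_fin P mA) in H3 *.
rewrite -EFinB /abse lee_fin normr_le0 subr_eq0 in H3.
by rewrite (eqP H3).
Qed.

End TV.

Lemma nbound (R : realType) (d C : R) : (forall n : nat, n%:R * d <= C) -> d <= 0.
Proof.
move=> H; rewrite leNgt; apply/negP => d0.
have hb : 0 <= `|C| / d by rewrite divr_ge0 // ltW.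
have := archi_boundP hb; set m := Num.Def.archi_bound _ => hm.
have := H m; rewrite (ltr_pdivrMr _ _ d0) in hm.
have := ler_norm C; lra.
Qed.

Lemma efin (R : realType) (y : \bar R) (M : R) : (0 <= y <= M%:E)%E ->
  y = (fine y)%:E /\ 0 <= fine y <= M.
Proof.
case: y => [r| |] //=; rewrite ?lee_fin //.
by rewrite leey andbF.
Qed.

Section Model.
Context (R : realType) (X U : ptopologicalType) (Rad : R)
  (Qo : X -> U -> probability (borel X) R).
Local Open Scope ereal_scope.

Lemma sup_ge x u c g Q : tv_ball Rad Qo x u Q ->
  c%:E + \int[Q]_(z in [set: borel X]) g z <= sup_step Rad Qo c g x u.
Proof. by move=> HQ; apply: ereal_sup_ubound; exists Q. Qed.

Lemma sup_le x u c g M :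
  (forall Q, tv_ball Rad Qo x u Q -> c%:E + \int[Q]_(z in [set: borel X]) g z <= M) ->
  sup_step Rad Qo c g x u <= M.
Proof. by move=> H; apply: ge_ereal_sup => _ [Q HQ <-]; exact: H. Qed.

Lemma ball_Qo x u : (0 <= Rad)%R -> tv_ball Rad Qo x u (Qo x u).
Proof. by move=> R0; rewrite /tv_ball /=; apply: le_trans (tv_self _) _; rewrite lee_fin. Qed.

End Model.

Unset Implicit Arguments.
Theorem mainTheorem4 (R : realType)
  (X U : completePseudoMetricType R)
  (polX : polish X) (polU : polish U)
  (Ux : X -> set U)
  (Ux_ne : forall x, Ux x !=set0)
  (Ux_compact : forall x, compact (Ux x))
  (Ux_meas : forall x, measurable (Ux x : set (borel U)))
  (f : X -> U -> R)
  (f_ge0 : forall x u, Ux x u -> 0 <= f x u)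
  (f_bnd : exists M : R, forall x u, Ux x u -> f x u <= M)
  (f_cont : {within [set p : X * U | Ux p.1 p.2],
              continuous (fun p : X * U => f p.1 p.2)})
  (Qo : X -> U -> probability (borel X) R)
  (Qo_cont : forall A : set (borel X), measurable A ->
     {within [set p : X * U | Ux p.1 p.2],
        continuous (fun p : X * U => fine (Qo p.1 p.2 A))})
  (Rad : R) (Rad_ge0 : 0 <= Rad) (Rad_le2 : Rad <= 2)
  (rho h : X -> R)
  (rho_bnd : bounded_fun_X rho) (h_bnd : bounded_fun_X h)
  (rho_cont : continuous rho) (h_cont : continuous h)
  (rho_ge0 : forall x, 0 <= rho x) (h_ge0 : forall x, 0 <= h x)
  (rho_meas : measurable_fun [set: borel X] (rho : borel X -> R))
  (h_meas : measurable_fun [set: borel X] (h : borel X -> R))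
  (rho_max : exists x0, forall x, rho x <= rho x0)
  (rho_min : exists x0, forall x, rho x0 <= rho x)
  (h_max : exists x0, forall x, h x <= h x0)
  (h_min : exists x0, forall x, h x0 <= h x)
  (phi : X -> U) (phi_sel : selector Ux phi) :
  canonical_triplet Rad Ux f Qo rho h phi <->
  (forall x : X,
     [/\ (rho x)%:E =
           ereal_inf [set sup_step Rad Qo 0 (fun z => (rho z)%:E) x u | u in Ux x],
         (rho x + h x)%:E =
           ereal_inf [set sup_step Rad Qo (f x u) (fun z => (h z)%:E) x u | u in Ux x],
         (rho x)%:E = sup_step Rad Qo 0 (fun z => (rho z)%:E) x (phi x) &
         (rho x + h x)%:E = sup_step Rad Qo (f x (phi x)) (fun z => (h z)%:E) x (phi x)]).
Proof.
have [xM HxM] := rho_max; have [xm Hxm] := rho_min.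
have [xH HxH] := h_max; have [Mf HMf] := f_bnd.
have r01 : forall z, 0 <= rho z <= rho xM by move=> z; rewrite rho_ge0 HxM.
have h01 : forall z, 0 <= h z <= h xH by move=> z; rewrite h_ge0 HxH.
set Mr := rho xM in r01 *. set Mh := h xH in h01 *.
have Iint (g : X -> R) (M : R) (Q : probability (borel X) R) :
  (forall z, 0 <= g z <= M) -> measurable_fun [set: borel X] (g : borel X -> R) ->
  exists2 i, (\int[Q]_(z in [set: borel X]) (g z)%:E)%E = i%:E & 0 <= i <= M.
  move=> g01 mg; have [E B] := efin (int_bnd Q g01 mg).
  by exists (fine (\int[Q]_(z in [set: borel X]) (g z)%:E)%E).
pose A x u := sup_step Rad Qo 0 (fun z => (rho z)%:E) x u.
pose T (n : nat) x u :=
  sup_step Rad Qo (f x u) (fun z => (n%:R * rho z + h z)%:E) x u.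
have Afin x u : exists2 a, A x u = a%:E & 0 <= a <= Mr.
  have [E B] : A x u = (fine (A x u))%:E /\ 0 <= fine (A x u) <= Mr.
    apply: efin; apply/andP; split.
    - apply: le_trans (sup_ge _ _ (ball_Qo Qo x u Rad_ge0)).
      by rewrite add0e; case/andP: (int_bnd (Qo x u) r01 rho_meas).
    - apply: sup_le => Q _; rewrite add0e.
      by case/andP: (int_bnd Q r01 rho_meas).
  by exists (fine (A x u)).
split.
- move=> [_ _ _ _ Hn] x.
  have Jst n : Jstar Rad Ux f Qo h n = fun z => (n%:R * rho z + h z)%:E.
    by apply/funext => z; case: (Hn n z) => _ ->.
  have Jpo n : Jpol Rad f Qo phi h n = fun z => (n%:R * rho z + h z)%:E.
    by apply/funext => z; case: (Hn n z) => -> ->.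
  have JsE n : Jstar Rad Ux f Qo h n.+1 x = ereal_inf [set T n x u | u in Ux x].
    by rewrite /= Jst.
  have JpE n : Jpol Rad f Qo phi h n.+1 x = T n x (phi x).
    by rewrite /= Jpo.
  have Fw u n : Ux x u -> (n%:R%:E * A x u <= T n x u)%E /\
      (T n x u <= n%:R%:E * A x u + (Mf + Mh)%:E)%E.
    move=> Uu; split.
    + have ne : [set (0%:E + \int[Q]_(z in [set: borel X]) (rho z)%:E)%E
                | Q in tv_ball Rad Qo x u] != set0.
        apply/set0P; eexists; exists (Qo x u) => //; exact: ball_Qo.
      rewrite /A /sup_step -ereal_supZl ?ler0n //.
      apply/ereal_supP => _ [_ [Q HQ <-] <-].
      apply: le_trans (sup_ge _ _ HQ).
      have [ir Er Br] := Iint _ _ Q r01 rho_meas.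
      have [ih Eh Bh] := Iint _ _ Q h01 h_meas.
      rewrite add0e int_lin // Er Eh -!EFinM -!EFinD lee_fin.
      have := f_ge0 _ _ Uu; lra.
    + apply: sup_le => Q HQ.
      have [a Ea Ba] := Afin x u.
      have [ir Er Br] := Iint _ _ Q r01 rho_meas.
      have [ih Eh Bh] := Iint _ _ Q h01 h_meas.
      have := sup_ge 0 (fun z => (rho z)%:E) HQ.
      rewrite add0e Er -/(A x u) Ea lee_fin => ira.
      rewrite int_lin // Er Eh -!EFinM -!EFinD lee_fin.
      have := HMf _ _ Uu; have := ler_wpM2l (ler0n R n) ira; lra.
  have lowA u : Ux x u -> forall a, A x u = a%:E -> rho x <= a.
    move=> Uu a Ea.
    rewrite -subr_le0; apply: (@nbound _ _ (Mf + Mh - rho x - h x)) => n.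
    have E := (Hn n.+1 x).2; rewrite JsE in E.
    have H1 : ((n.+1%:R * rho x + h x)%:E <= T n x u)%E.
      by rewrite -E; apply: ereal_inf_lbound; exists u.
    have [_ H2] := Fw u n Uu; rewrite Ea in H2.
    have := le_trans H1 H2; rewrite -EFinM -EFinD lee_fin -natr1; lra.
  have Up := phi_sel.2 x.
  have c1 : (rho x)%:E = A x (phi x).
    have [a Ea Ba] := Afin x (phi x); rewrite Ea; congr EFin; apply/eqP; rewrite eq_le.
    rewrite (lowA _ Up a Ea) andTb.
    rewrite -subr_le0; apply: (@nbound _ _ (rho x + h x)) => n.
    have [E1 E2] := Hn n.+1 x; rewrite E2 JpE in E1.
    have [H1 _] := Fw _ n Up; rewrite E1 Ea -EFinM lee_fin -natr1 in H1.
    lra.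
  have [E1 E2] := Hn 1%N x; rewrite mul1r in E2.
  split.
  + apply/eqP; rewrite eq_le; apply/andP; split.
    * apply/ereal_infP => _ [u Uu <-].
      have [a Ea _] := Afin x u; rewrite -/(A x u) Ea lee_fin; exact: lowA Uu a Ea.
    * rewrite c1; apply: ereal_inf_lbound; by exists (phi x).
  + by rewrite -E2.
  + exact: c1.
  + by rewrite -E2 -E1.
- move=> H.
  have L : forall x u, Ux x u -> forall Q, tv_ball Rad Qo x u Q ->
      ((rho x)%:E <= \int[Q]_(z in [set: borel X]) (rho z)%:E)%E.
    have [R0|Rpos] := eqVneq Rad 0.
    + move=> x u Uu Q HQ.
      have EQ Q' : tv_ball Rad Qo x u Q' -> (\int[Q']_(z in [set: borel X]) (rho z)%:E =
                   \int[Qo x u]_(z in [set: borel X]) (rho z)%:E)%E.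
        move=> HQ'; apply: eq_measure_integral => B mB _; apply: tv0_eq => //.
        by move: HQ'; rewrite /tv_ball /= R0.
      rewrite EQ //.
      have [Ha _ _ _] := H x.
      apply: (@le_trans _ _ (A x u)).
        by rewrite Ha; apply: ereal_inf_lbound; exists u.
      by apply: sup_le => Q' HQ'; rewrite add0e EQ.
    + have Rp : 0 < Rad by rewrite lt_neqAle eq_sym Rpos Rad_ge0.
      have cst_r : forall z, rho z = rho xm.
        have b0 : 0 <= Rad / 2 by rewrite divr_ge0 // ltW.
        pose b : {nonneg R} := NngNum b0.
        have b1 : b%:num <= 1 by rewrite /= ler_pdivrMr // mul1r.
        pose Q := mixP (Qo xm (phi xm)) xM b1.
        have HQ : tv_ball Rad Qo xm (phi xm) Q.
          rewrite /tv_ball /=; apply: le_trans (tv_mix _ _ b1) _; rewrite lee_fin /=.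
          lra.
        have [_ _ Hc1 _] := H xm.
        have := sup_ge 0 (fun z => (rho z)%:E) HQ; rewrite -Hc1 add0e.
        have r0E : forall z, (0 <= (rho z)%:E)%E by move=> z; rewrite lee_fin.
        have mE : measurable_fun [set: borel X] (fun z => (rho z)%:E).
          exact/measurable_EFinP.
        rewrite int_mixP //.
        have [io Eo Bo] := Iint _ _ (Qo xm (phi xm)) r01 rho_meas.
        have := int_ge (Qo xm (phi xm)) (rho_ge0 xm) Hxm rho_meas.
        rewrite Eo lee_fin => iom.
        rewrite -!EFinM -EFinD lee_fin /= => Hm.
        have bp : 0 < Rad / 2 by rewrite divr_gt0.
        have h1 : 0 <= (1 - Rad / 2) * (io - rho xm).
          by apply: mulr_ge0; rewrite subr_ge0.
        have : Rad / 2 * (rho xM - rho xm) <= 0 by move: h1 Hm; rewrite /=; lra.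
        rewrite pmulr_rle0 // subr_le0 => MM z.
        by apply/eqP; rewrite eq_le Hxm andbT (le_trans (HxM z) MM).
      move=> x u Uu Q HQ.
      have -> : (fun z => (rho z)%:E) = fun _ => (rho xm)%:E.
        by apply/funext => z; rewrite cst_r.
      by rewrite int_cstP cst_r.
  have main : forall n x, Jpol Rad f Qo phi h n x = Jstar Rad Ux f Qo h n x /\
      Jstar Rad Ux f Qo h n x = (n%:R * rho x + h x)%:E.
    elim=> [|n IH] x; first by rewrite /= mul0r add0r.
    have Jst : Jstar Rad Ux f Qo h n = fun z => (n%:R * rho z + h z)%:E.
      by apply/funext => z; case: (IH z) => _ ->.
    have Jpo : Jpol Rad f Qo phi h n = fun z => (n%:R * rho z + h z)%:E.
      by apply/funext => z; case: (IH z) => -> ->.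
    have JsE : Jstar Rad Ux f Qo h n.+1 x = ereal_inf [set T n x u | u in Ux x].
      by rewrite /= Jst.
    have JpE : Jpol Rad f Qo phi h n.+1 x = T n x (phi x).
      by rewrite /= Jpo.
    have [Ha Hb Hc1 Hc2] := H x.
    have low u : Ux x u -> ((n.+1%:R * rho x + h x)%:E <= T n x u)%E.
      move=> Uu.
      have HB : ((rho x + h x)%:E <= sup_step Rad Qo (f x u) (fun z => (h z)%:E) x u)%E.
        by rewrite Hb; apply: ereal_inf_lbound; exists u.
      have HB2 : (sup_step Rad Qo (f x u) (fun z => (h z)%:E) x u <=
                  T n x u - (n%:R * rho x)%:E)%E.
        apply: sup_le => Q HQ; rewrite leeBrDr //.
        apply: le_trans (sup_ge _ _ HQ).
        have := L x u Uu Q HQ.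
        have [ir Er Br] := Iint _ _ Q r01 rho_meas.
        have [ih Eh Bh] := Iint _ _ Q h01 h_meas.
        rewrite int_lin // Er Eh lee_fin => rir.
        rewrite -!EFinM -!EFinD lee_fin.
        have := ler_wpM2l (ler0n R n) rir; lra.
      have := le_trans HB HB2; rewrite leeBrDr // -EFinD => HH.
      apply: le_trans HH; rewrite lee_fin -natr1; lra.
    have up : (T n x (phi x) <= (n.+1%:R * rho x + h x)%:E)%E.
      apply: sup_le => Q HQ.
      have [ir Er Br] := Iint _ _ Q r01 rho_meas.
      have [ih Eh Bh] := Iint _ _ Q h01 h_meas.
      have h1 := sup_ge 0 (fun z => (rho z)%:E) HQ.
      rewrite -Hc1 add0e Er lee_fin in h1.
      have h2 := sup_ge (f x (phi x)) (fun z => (h z)%:E) HQ.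
      rewrite -Hc2 Eh -EFinD lee_fin in h2.
      rewrite int_lin // Er Eh -!EFinM -!EFinD lee_fin.
      have := ler_wpM2l (ler0n R n) h1; rewrite -natr1; lra.
    have Up := phi_sel.2 x.
    have eqT : T n x (phi x) = (n.+1%:R * rho x + h x)%:E.
      by apply/eqP; rewrite eq_le up low.
    have eqJ : Jstar Rad Ux f Qo h n.+1 x = (n.+1%:R * rho x + h x)%:E.
      rewrite JsE; apply/eqP; rewrite eq_le; apply/andP; split.
      - by rewrite -eqT; apply: ereal_inf_lbound; exists (phi x).
      - by apply/ereal_infP => _ [u Uu <-]; exact: low.
    by rewrite eqJ JpE eqT.
  exact: (And5 (conj rho_bnd h_bnd) (conj rho_cont h_cont)
    (conj (conj rho_ge0 h_ge0) (conj rho_meas h_meas)) phi_sel main).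
Qed.
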